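(* Let $M \geq 1$ and let $f \colon (\mathbb{W},d_{\mathrm{par}}) \to (\mathbb{H},d)$ be an $M$-bilipschitz map. Then for every $\epsilon \in (0,1]$ there exist $C = C(\epsilon,M) \geq 10$ and $\delta = \delta(C,\epsilon,M) > 0$ such that for all $w \in \mathbb{W}$ and $r > 0$: $$\rho_{f}(B(w,Cr)) < \delta \implies \beta_{f}(B(w,r)) < \epsilon.$$
   Context: $\mathbb{H}$ is $\mathbb{R}^{3}$ with group law $(x_{1},y_{1},t_{1}) \cdot (x_{2},y_{2},t_{2}) = (x_{1}+x_{2},y_{1}+y_{2},t_{1}+t_{2}+\tfrac{1}{2}(x_{1}y_{2}-x_{2}y_{1}))$, metric $d(p,q) = \|q^{-1}\cdot p\|$ with $\|(x,y,t)\| = \max\{\sqrt{x^{2}+y^{2}},\sqrt{|t|}\}$, and $N(E,\delta) = \{p : \operatorname{dist}(p,E) \leq \delta\}$. A horizontal line in $\mathbb{H}$ is a set $p \cdot \{(sa,sb,0) : s \in \mathbb{R}\}$ with $p \in \mathbb{H}$, $(a,b) \neq 0$. A vertical plane is a set $\{(x,y,t) : (x,y) \in \lambda, t \in \mathbb{R}\}$ for an affine line $\lambda \subset \mathbb{R}^{2}$. $\mathbb{W}$ is $\mathbb{R}^{2}$ with $d_{\mathrm{par}}((y,t),(\xi,\tau)) = \max\{|y-\xi|,|t-\tau|^{1/2}\}$; horizontal lines in $\mathbb{W}$ are the sets $\mathbb{R} \times \{t\}$; $B(w,r)$ is the closed $d_{\mathrm{par}}$-ball. The ruler coefficient $\rho_{f}(B(w,r))$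 is the infimum of $\rho > 0$ such that for every horizontal line $\ell \subset \mathbb{W}$ there is a horizontal line $L \subset \mathbb{H}$ with $f(\ell \cap B(w,r)) \subset N(L,\rho r)$. For a vertical plane $\mathbb{V}$, $\beta_{f}(\mathbb{V};B(w,r))$ is the infimum of $\epsilon > 0$ such that for every horizontal line $\ell \subset \mathbb{W}$ there is a horizontal line $L \subset \mathbb{V}$ with $f(\ell \cap B(w,r)) \subset N(L,\epsilon r)$; $\beta_{f}(B(w,r)) := \inf_{\mathbb{V}} \beta_{f}(\mathbb{V};B(w,r))$ over all vertical planes. *)

(* Defs.v *)
From HB Require Import structures.
From mathcomp Require Import all_boot all_order all_algebra.
From mathcomp Require Import all_classical all_reals.
From mathcomp Require Import ereal.
Set Implicit Arguments. Unset Strict Implicit. Unset Printing Implicit Defensive.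
Import Order.TTheory GRing.Theory Num.Theory.
Local Open Scope classical_set_scope.
Local Open Scope ring_scope.

Section Heis.
Variable R : realType.

Definition Hpt := (R * R * R)%type.
Definition Wpt := (R * R)%type.

Definition hx (p : Hpt) : R := p.1.1.
Definition hy (p : Hpt) : R := p.1.2.
Definition ht (p : Hpt) : R := p.2.

Definition hmul (p q : Hpt) : Hpt :=
  (hx p + hx q, hy p + hy q,
   ht p + ht q + 2^-1 * (hx p * hy q - hx q * hy p)).

Definition hinv (p : Hpt) : Hpt := (- hx p, - hy p, - ht p).

Definition hnorm (p : Hpt) : R :=
  Num.max (Num.sqrt (hx p ^+ 2 + hy p ^+ 2)) (Num.sqrt `|ht p|).

Definition hdist (p q : Hpt) : R := hnorm (hmul (hinv q) p).

Definition hdist_set (p : Hpt) (E : set Hpt) : R := inf [set hdist p e | e in E].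

Definition nbhd (E : set Hpt) (delta : R) : set Hpt :=
  [set p | hdist_set p E <= delta].

Definition horiz_line_H (L : set Hpt) : Prop :=
  exists (p : Hpt) (a b : R), (a, b) != (0, 0) /\
    L = [set q | exists s : R, q = hmul p (s * a, s * b, 0)].

Definition affine_line (lam : set (R * R)) : Prop :=
  exists (x0 y0 u v : R), (u, v) != (0, 0) /\
    lam = [set z | exists s : R, z = (x0 + s * u, y0 + s * v)].

Definition vertical_plane (V : set Hpt) : Prop :=
  exists lam, affine_line lam /\ V = [set p | lam (hx p, hy p)].

Definition dpar (v w : Wpt) : R :=
  Num.max `|v.1 - w.1| (Num.sqrt `|v.2 - w.2|).

Definition Wball (w : Wpt) (r : R) : set Wpt := [set v | dpar w v <= r].

Definition horiz_line_W (t : R) : set Wpt := [set v | v.2 = t].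

Definition bilipschitz (M : R) (f : Wpt -> Hpt) : Prop :=
  forall v w : Wpt, M^-1 * dpar v w <= hdist (f v) (f w) <= M * dpar v w.

Definition ruler_coeff (f : Wpt -> Hpt) (w : Wpt) (r : R) : \bar R :=
  ereal_inf [set (rho%:E)%E | rho in
    [set rho : R | 0 < rho /\
       forall t : R, exists L : set Hpt, horiz_line_H L /\
         f @` (horiz_line_W t `&` Wball w r) `<=` nbhd L (rho * r)]].

Definition beta_plane (f : Wpt -> Hpt) (V : set Hpt) (w : Wpt) (r : R) : \bar R :=
  ereal_inf [set (eps%:E)%E | eps in
    [set eps : R | 0 < eps /\
       forall t : R, exists L : set Hpt, horiz_line_H L /\ L `<=` V /\
         f @` (horiz_line_W t `&` Wball w r) `<=` nbhd L (eps * r)]].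

Definition beta_coeff (f : Wpt -> Hpt) (w : Wpt) (r : R) : \bar R :=
  ereal_inf [set beta_plane f V w r | V in vertical_plane].

End Heis.

(* Main.v *)
Require Import Defs.
From HB Require Import structures.
From mathcomp Require Import all_boot all_order all_algebra.
From mathcomp Require Import all_classical all_reals.
From mathcomp Require Import ereal.
From mathcomp Require Import ring lra.
Import Order.TTheory GRing.Theory Num.Theory.
Local Open Scope ring_scope.

Section S.
Variable R : realType.
Implicit Types (p q X Y Z : Hpt R).

Lemma sqrt_le_iff (a rho : R) : 0 <= rho -> (Num.sqrt a <= rho) = (a <= rho ^+ 2).
Proof.
move=> h; rewrite -{1}(ger0_norm h) -sqrtr_sqr ler_sqrt //; exact: sqr_ge0.
Qed.

Lemma hnorm_le p rho : 0 <= rho ->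
  (hnorm p <= rho) <-> (hx p ^+ 2 + hy p ^+ 2 <= rho ^+ 2 /\ `|ht p| <= rho ^+ 2).
Proof.
move=> h; rewrite /hnorm ge_max !sqrt_le_iff //; split; first by move/andP.
by case=> -> ->.
Qed.

Lemma hnorm_ge0 p : 0 <= hnorm p.
Proof. by rewrite /hnorm le_max sqrtr_ge0. Qed.

Definition om X Y := ht X - ht Y - (hx Y * hy X - hx X * hy Y) / 2.

Lemma hdist_le X Y rho : 0 <= rho ->
  (hdist X Y <= rho) <->
  ((hx X - hx Y) ^+ 2 + (hy X - hy Y) ^+ 2 <= rho ^+ 2 /\ `|om X Y| <= rho ^+ 2).
Proof.
move=> h; rewrite /hdist hnorm_le //.
have -> : hx (hmul (hinv Y) X) = hx X - hx Y by rewrite /hx /= addrC.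
have -> : hy (hmul (hinv Y) X) = hy X - hy Y by rewrite /hy /= addrC.
have -> : ht (hmul (hinv Y) X) = om X Y.
  rewrite /om /hmul /hinv /ht /hx /hy /=; ring.
by [].
Qed.


Lemma abs_le_sq (u c : R) : 0 <= c -> u ^+ 2 <= c ^+ 2 -> `|u| <= c.
Proof.
move=> hc hu; have e : `|u| ^+ 2 = u ^+ 2 by rewrite real_normK // num_real.
have n0 := normr_ge0 u; rewrite -e in hu; nra.
Qed.

Lemma hnorm_mul p q : hnorm (hmul p q) <= hnorm p + hnorm q.
Proof.
have a0 := hnorm_ge0 p; have b0 := hnorm_ge0 q.
have [hp1 hp2] := (hnorm_le _ _ a0).1 (lexx _).
have [hq1 hq2] := (hnorm_le _ _ b0).1 (lexx _).
set a := hnorm p in a0 hp1 hp2 *; set b := hnorm q in b0 hq1 hq2 *.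
apply/hnorm_le; first by rewrite addr_ge0.
clearbody a b.
move: hp1 hp2 hq1 hq2; rewrite /hmul /hx /hy /ht /=.
case: p => [[x1 y1] t1]; case: q => [[x2 y2] t2] /= hp1 hp2 hq1 hq2.
have cs1 : `|x1 * x2 + y1 * y2| <= a * b.
  apply: abs_le_sq; first exact: mulr_ge0.
  have : (x1 * x2 + y1 * y2) ^+ 2 <= (x1^+2 + y1^+2) * (x2^+2+y2^+2).
    have := sqr_ge0 (x1 * y2 - x2 * y1); lra.
  move=> h; rewrite exprMn; apply: le_trans h _.
  apply: ler_pM => //; by rewrite addr_ge0 // sqr_ge0.
have cs2 : `|x1 * y2 - x2 * y1| <= a * b.
  apply: abs_le_sq; first exact: mulr_ge0.
  have : (x1 * y2 - x2 * y1) ^+ 2 <= (x1^+2 + y1^+2) * (x2^+2+y2^+2).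
    have := sqr_ge0 (x1 * x2 + y1 * y2); lra.
  move=> h; rewrite exprMn; apply: le_trans h _.
  apply: ler_pM => //; by rewrite addr_ge0 // sqr_ge0.
split.
  have := ler_norm (x1 * x2 + y1 * y2); lra.
have h3 := ler_normD (t1 + t2) (2^-1 * (x1 * y2 - x2 * y1)).
have h4 := ler_normD t1 t2.
rewrite normrM (ger0_norm (_ : 0 <= 2^-1)) in h3; last by rewrite invr_ge0.
have h5 : 2^-1 * `|x1 * y2 - x2 * y1| <= 2^-1 * (a * b) by rewrite ler_pM2l // invr_gt0.
have : 0 <= a * b by exact: mulr_ge0.
lra.
Qed.

Lemma hdist_ge0 X Y : 0 <= hdist X Y.
Proof. exact: hnorm_ge0. Qed.

Lemma hdist_tri X Y Z : hdist X Z <= hdist X Y + hdist Y Z.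
Proof.
rewrite /hdist addrC.
have -> : hmul (hinv Z) X = hmul (hmul (hinv Z) Y) (hmul (hinv Y) X).
  case: X => [[x1 y1] t1]; case: Y => [[x2 y2] t2]; case: Z => [[x3 y3] t3].
  rewrite /hmul /hinv /hx /hy /ht /=; congr (_, _, _); ring.
exact: hnorm_mul.
Qed.

Lemma hdist_sym X Y : hdist X Y = hdist Y X.
Proof.
rewrite /hdist /hnorm.
case: X => [[x1 y1] t1]; case: Y => [[x2 y2] t2].
rewrite /hmul /hinv /hx /hy /ht /=.
congr (Num.max (Num.sqrt _) (Num.sqrt _)).
  ring.
rewrite -normrN; congr `|_|; ring.
Qed.


Lemma eq_mod (k w u v : R) : w = 0 -> u - v = w * k -> u = v.
Proof. by move=> -> /eqP; rewrite mul0r subr_eq0 => /eqP. Qed.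

Definition rot (a b : R) (h : Hpt R) : Hpt R :=
  (a * hx h + b * hy h, - b * hx h + a * hy h, ht h).
Definition psi p (a b : R) X := rot a b (hmul (hinv p) X).

Lemma rot_mul a b g h : a ^+ 2 + b ^+ 2 = 1 ->
  rot a b (hmul g h) = hmul (rot a b g) (rot a b h).
Proof.
move=> ab; case: g => [[x1 y1] t1]; case: h => [[x2 y2] t2].
rewrite /rot /hmul /hx /hy /ht /=; congr (_, _, _); try ring.
apply: (@eq_mod (- 2^-1 * (x1 * y2 - x2 * y1)) (a^+2+b^+2-1)); first by rewrite ab subrr.
ring.
Qed.

Lemma rot_inv a b g : rot a b (hinv g) = hinv (rot a b g).
Proof.
case: g => [[x1 y1] t1]; rewrite /rot /hinv /hx /hy /ht /=; congr (_, _, _); ring.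
Qed.

Lemma hnorm_rot a b h : a ^+ 2 + b ^+ 2 = 1 -> hnorm (rot a b h) = hnorm h.
Proof.
move=> ab; rewrite /hnorm /rot /hx /hy /ht /=; congr (Num.max (Num.sqrt _) _).
apply: (@eq_mod (h.1.1 ^+ 2 + h.1.2 ^+ 2) (a^+2+b^+2-1)); first by rewrite ab subrr.
ring.
Qed.

Lemma hdist_psi p a b X Y : a ^+ 2 + b ^+ 2 = 1 ->
  hdist (psi p a b X) (psi p a b Y) = hdist X Y.
Proof.
move=> ab; rewrite /hdist /psi -rot_inv -rot_mul // hnorm_rot //.
congr hnorm.
case: X => [[x1 y1] t1]; case: Y => [[x2 y2] t2]; case: p => [[x3 y3] t3].
rewrite /hmul /hinv /hx /hy /ht /=; congr (_, _, _); ring.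
Qed.

Lemma psi_mul p a b q h : a ^+ 2 + b ^+ 2 = 1 ->
  psi p a b (hmul q h) = hmul (psi p a b q) (rot a b h).
Proof.
move=> ab; rewrite /psi -rot_mul //; congr rot.
case: q => [[x1 y1] t1]; case: h => [[x2 y2] t2]; case: p => [[x3 y3] t3].
rewrite /hmul /hinv /hx /hy /ht /=; congr (_, _, _); ring.
Qed.


Definition phi X := ht X - hx X * hy X / 2.

Lemma near_bounds X Y rho : 0 <= rho -> hdist X Y <= rho ->
  [/\ `|hy X - hy Y| <= rho, `|hx X - hx Y| <= rho &
      `|phi X - phi Y| <= rho ^+ 2 + rho * (`|hy X| + `|hy Y|) / 2].
Proof.
move=> h0 /(hdist_le _ _ _ h0) [h1 h2].
have dy : `|hy X - hy Y| <= rho.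
  apply: abs_le_sq => //; have := sqr_ge0 (hx X - hx Y); lra.
have dx : `|hx X - hx Y| <= rho.
  apply: abs_le_sq => //; have := sqr_ge0 (hy X - hy Y); lra.
split => //.
have -> : phi X - phi Y = om X Y - (hx X - hx Y) * (hy X + hy Y) / 2.
  rewrite /phi /om; ring.
have e1 := ler_normB (om X Y) ((hx X - hx Y) * (hy X + hy Y) / 2).
have e2 : `|(hx X - hx Y) * (hy X + hy Y) / 2| <= rho * (`|hy X| + `|hy Y|) / 2.
  rewrite normrM normrM (ger0_norm (_ : 0 <= 2^-1)) ?invr_ge0 //.
  have := ler_normD (hy X) (hy Y); have := normr_ge0 (hx X - hx Y).
  have := normr_ge0 (hy X + hy Y); nra.
lra.
Qed.

Definition lineQ q (a b s : R) : Hpt R := hmul q (s * a, s * b, 0).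

Lemma lineQ_hy q a b s : hy (lineQ q a b s) = hy q + s * b.
Proof. by rewrite /lineQ /hmul /hy /=. Qed.

Lemma lineQ_phi q a b s1 s2 :
  phi (lineQ q a b s2) - phi (lineQ q a b s1) =
  - a * (s2 - s1) * (hy (lineQ q a b s1) + hy (lineQ q a b s2)) / 2.
Proof.
case: q => [[x1 y1] t1]; rewrite /phi /lineQ /hmul /hx /hy /ht /=; ring.
Qed.

Lemma lineQ_dist q a b s1 s2 : a ^+ 2 + b ^+ 2 = 1 ->
  hdist (lineQ q a b s1) (lineQ q a b s2) = `|s1 - s2|.
Proof.
move=> ab; rewrite /hdist /hnorm.
have -> : hmul (hinv (lineQ q a b s2)) (lineQ q a b s1) = ((s1 - s2) * a, (s1 - s2) * b, 0).
  case: q => [[x1 y1] t1]; rewrite /lineQ /hmul /hinv /hx /hy /ht /=; congr (_, _, _); ring.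
rewrite /hx /hy /ht /= normr0 sqrtr0.
have -> : ((s1 - s2) * a) ^+ 2 + ((s1 - s2) * b) ^+ 2 = (s1 - s2) ^+ 2.
  apply: (@eq_mod ((s1 - s2) ^+ 2) (a^+2+b^+2-1)); first by rewrite ab subrr.
  ring.
rewrite sqrtr_sqr; apply/max_idPl; exact: normr_ge0.
Qed.

Lemma dist_flat X c rho : 0 <= rho -> `|hy X| <= rho -> `|phi X - c| <= rho ^+ 2 ->
  hdist X (hx X, 0, c) <= rho.
Proof.
move=> h0 h1 h2; apply/hdist_le => //; rewrite /hx /hy /ht /= subrr expr0n /= add0r subr0.
split.
  have : `|X.1.2| ^+ 2 <= rho ^+ 2 by rewrite ler_sqr ?nnegrE ?normr_ge0.
  by rewrite real_normK // num_real.
move: h2; rewrite /om /phi /hx /hy /ht /=.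
have -> : X.2 - c - (X.1.1 * X.1.2 - X.1.1 * 0) / 2 = X.2 - X.1.1 * X.1.2 / 2 - c by ring.
by [].
Qed.

End S.
Arguments om {R}. Arguments rot {R}. Arguments psi {R}. Arguments phi {R}. Arguments lineQ {R}.
Arguments sqrt_le_iff {R}.
Arguments hnorm_le {R}.
Arguments hnorm_ge0 {R}.
Arguments hdist_le {R}.
Arguments abs_le_sq {R}.
Arguments hnorm_mul {R}.
Arguments hdist_ge0 {R}.
Arguments hdist_tri {R}.
Arguments hdist_sym {R}.
Arguments eq_mod {R}.
Arguments rot_mul {R}.
Arguments rot_inv {R}.
Arguments hnorm_rot {R}.
Arguments hdist_psi {R}.
Arguments psi_mul {R}.
Arguments near_bounds {R}.
Arguments lineQ_hy {R}.
Arguments lineQ_phi {R}.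
Arguments lineQ_dist {R}.
Arguments dist_flat {R}.

Section C.
Variable R : realType.

Lemma absB_le (x y e f : R) : `|x - y| <= e -> `|y| <= f -> `|x| <= e + f.
Proof. move=> h1 h2; have := ler_normD (x - y) y; rewrite subrK; lra. Qed.

Lemma absB_le' (x y e f : R) : `|x - y| <= e -> `|x| <= f -> `|y| <= e + f.
Proof. by rewrite distrC; apply: absB_le. Qed.

Lemma numB (M r D u1 u2 u3 p1 p2 p3 : R) :
  1 <= M -> 0 < r -> 0 <= D -> D <= r ->
  0 <= u1 -> 0 <= u2 -> 0 <= u3 ->
  u1 <= D -> u2 <= M * r + u1 -> u3 <= D + u2 ->
  p1 <= D ^+ 2 + D * (u1 + 0) / 2 ->
  p2 <= (M * r) ^+ 2 + M * r * (u2 + u1) / 2 + p1 ->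
  p3 <= D ^+ 2 + D * (u2 + u3) / 2 + p2 ->
  [/\ u2 <= 2 * M * r, u3 <= 3 * M * r & p3 <= 9 * M ^+ 2 * r ^+ 2].
Proof.
move=> M1 r0 D0 Dr u10 u20 u30 h1 h2 h3 h4 h5 h6.
have Mr : r <= M * r by rewrite ler_peMl // ltW.
have u2b : u2 <= 2 * M * r by lra.
have u3b : u3 <= 3 * M * r by lra.
split => //.
have e1 : p1 <= 2 * r ^+ 2 by nra.
have e2 : M * r * (u2 + u1) <= M * r * (3 * M * r).
  by rewrite ler_pM2l ?mulr_gt0 //; [lra | lra].
have e3 : D * (u2 + u3) <= r * (5 * M * r).
  apply: ler_pM => //; lra.
have e4 : r ^+ 2 <= M ^+ 2 * r ^+ 2 by nra.
have e5 : M * r ^+ 2 <= M ^+ 2 * r ^+ 2 by nra.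
have e6 : D ^+ 2 <= r ^+ 2 by nra.
nra.
Qed.


Lemma stepB (M r D : R) (X Y : R -> Hpt R) q a b y :
  1 <= M -> 0 < r -> 0 < D -> D <= r ->
  hdist (X y) (Y y) <= M * r ->
  (exists s, hdist (Y y) (s, 0, 0) <= D) ->
  (exists s, hdist (X y) (lineQ q a b s) <= D) ->
  exists s, [/\ hdist (X y) (lineQ q a b s) <= D, `|hy (X y)| <= 2 * M * r,
    `|hy (lineQ q a b s)| <= 3 * M * r & `|phi (lineQ q a b s)| <= 9 * M ^+ 2 * r ^+ 2].
Proof.
move=> M1 r0 D0 Dr H1 [s0 hs0] [s hs]; exists s.
have MR0 : 0 <= M * r by rewrite mulr_ge0 // ltW // (lt_le_trans ltr01 M1).
have [n1 _ n2] := near_bounds _ _ _ (ltW D0) hs0.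
have [m1 _ m2] := near_bounds _ _ _ MR0 H1.
have [k1 _ k2] := near_bounds _ _ _ (ltW D0) hs.
have P0 : phi ((s0, 0, 0) : Hpt R) = 0 by rewrite /phi /hx /hy /ht /=; ring.
have Y0 : hy ((s0, 0, 0) : Hpt R) = 0 by [].
rewrite P0 Y0 subr0 normr0 in n2; rewrite Y0 subr0 in n1.
have u2 := absB_le _ _ _ _ m1 (lexx _).
have u3 := absB_le' _ _ _ _ k1 (lexx _).
have p2 := absB_le _ _ _ _ m2 (lexx _).
have p3 := absB_le' _ _ _ _ k2 (lexx _).
have [? ? ?] := numB _ _ _ _ _ _ _ _ _ M1 r0 (ltW D0) Dr (normr_ge0 _) (normr_ge0 _) (normr_ge0 _)
  n1 u2 u3 n2 p2 p3.
by split.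
Qed.


Lemma pair_sep (M r C D : R) (Xi Xj : Hpt R) q a b si sj (dy : R) :
  1 <= M -> a ^+ 2 + b ^+ 2 = 1 -> 4 * M * D <= C * r ->
  C * r <= dy -> dy <= M * hdist Xi Xj ->
  hdist Xi (lineQ q a b si) <= D -> hdist Xj (lineQ q a b sj) <= D ->
  C * r <= 2 * M * `|si - sj|.
Proof.
move=> M1 ab h1 h2 h3 hi hj.
have t1 := hdist_tri Xi (lineQ q a b si) Xj.
have t2 := hdist_tri (lineQ q a b si) (lineQ q a b sj) Xj.
rewrite lineQ_dist // (hdist_sym (lineQ q a b sj) Xj) in t2.
have : hdist Xi Xj <= 2 * D + `|si - sj| by lra.
move=> h; have : M * hdist Xi Xj <= M * (2 * D + `|si - sj|).
  by rewrite ler_pM2l // (lt_le_trans ltr01 M1).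
lra.
Qed.

Lemma b_bound (M r C : R) (d b hi hj : R) :
  1 <= M -> 0 < r -> C * r <= 2 * M * `|d| ->
  hi - hj = d * b -> `|hi| <= 3 * M * r -> `|hj| <= 3 * M * r ->
  C * `|b| <= 12 * M ^+ 2.
Proof.
move=> M1 r0 h1 e h2 h3.
have : `|d| * `|b| <= 6 * M * r.
  rewrite -normrM -e; have := ler_normB hi hj; lra.
move=> h4; have b0 := normr_ge0 b; have d0 := normr_ge0 d.
have : C * r * `|b| <= 2 * M * `|d| * `|b| by nra.
move=> h5.
have : (C * `|b|) * r <= (12 * M ^+ 2) * r by nra.
by rewrite ler_pM2r.
Qed.

Lemma a_bound (M C a b : R) : 1 <= M -> 24 * M ^+ 2 <= C ->
  C * `|b| <= 12 * M ^+ 2 -> a ^+ 2 + b ^+ 2 = 1 -> 1 / 2 <= `|a|.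
Proof.
move=> M1 hC hb ab.
have M2 : 1 <= M ^+ 2 by nra.
have b0 := normr_ge0 b.
have : `|b| <= 1 / 2 by nra.
move=> hb2; have eb : `|b| ^+ 2 = b ^+ 2 by rewrite real_normK // num_real.
have ea : `|a| ^+ 2 = a ^+ 2 by rewrite real_normK // num_real.
have a0 := normr_ge0 a.
nra.
Qed.

Lemma S_bound (M r C : R) (d a S p1 p2 : R) :
  1 <= M -> 0 < r -> C * r <= 2 * M * `|d| -> 1 / 2 <= `|a| ->
  p2 - p1 = - a * d * S / 2 -> `|p1| <= 9 * M ^+ 2 * r ^+ 2 -> `|p2| <= 9 * M ^+ 2 * r ^+ 2 ->
  C * `|S| <= 144 * M ^+ 3 * r.
Proof.
move=> M1 r0 h1 ha e h2 h3.
have : `|a| * `|d| * `|S| <= 36 * M ^+ 2 * r ^+ 2.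
  have : `|p2 - p1| <= 18 * M ^+ 2 * r ^+ 2 by have := ler_normB p2 p1; lra.
  rewrite e !normrM normrN (ger0_norm (_ : 0 <= 2^-1)) ?invr_ge0 //; lra.
move=> h4; have S0 := normr_ge0 S; have d0 := normr_ge0 d; have a0 := normr_ge0 a.
have h5 : C * r * `|S| <= 2 * M * `|d| * `|S| by nra.
have ds0 : 0 <= `|d| * `|S| by exact: mulr_ge0.
have h6 : `|d| * `|S| <= 2 * (`|a| * `|d| * `|S|) by nra.
have M0 : 0 <= M by lra.
have h7 : M * (`|d| * `|S|) <= M * (72 * M ^+ 2 * r ^+ 2).
  by apply: ler_wpM2l => //; lra.
have : (C * `|S|) * r <= (144 * M ^+ 3 * r) * r by lra.
by rewrite ler_pM2r.
Qed.


Lemma mid_bound (K C A B Cc : R) : C * `|A + B| <= K -> C * `|B + Cc| <= K ->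
  C * `|A + Cc| <= K -> 0 < C -> C * `|B| <= 3 / 2 * K.
Proof.
move=> h1 h2 h3 C0.
have e : B = ((A + B) + (B + Cc) - (A + Cc)) / 2 by field.
have : `|B| <= (`|A + B| + `|B + Cc| + `|A + Cc|) / 2.
  rewrite {1}e normrM (ger0_norm (_ : 0 <= 2^-1)) ?invr_ge0 // ler_pM2r ?invr_gt0 //.
  have := ler_normB (A + B + (B + Cc)) (A + Cc).
  have := ler_normD (A + B) (B + Cc); lra.
move=> h; have : C * `|B| <= C * ((`|A + B| + `|B + Cc| + `|A + Cc|) / 2).
  by rewrite ler_pM2l.
lra.
Qed.

Lemma final_hy (M r C D eps b d Hb Hy hX : R) :
  1 <= M -> 0 < r -> 0 < C -> 0 <= D ->
  C * `|b| <= 12 * M ^+ 2 -> C * `|Hb| <= 216 * M ^+ 3 * r -> `|d| <= 2 * M * r ->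
  Hy = Hb + d * b -> `|hX - Hy| <= D -> 4 * D <= eps * r -> 960 * M ^+ 3 <= C * eps ->
  C * `|Hy| <= 240 * M ^+ 3 * r /\ `|hX| <= eps * r / 2.
Proof.
move=> M1 r0 C0 D0 hb hB hd e hXY hD hC.
have b0 := normr_ge0 b; have d0 := normr_ge0 d.
have h1 : C * `|Hy| <= 240 * M ^+ 3 * r.
  have : `|Hy| <= `|Hb| + `|d| * `|b| by rewrite e -normrM ler_normD.
  move=> h; have : C * `|Hy| <= C * `|Hb| + `|d| * (C * `|b|).
    have : C * `|Hy| <= C * (`|Hb| + `|d| * `|b|) by rewrite ler_pM2l.
    lra.
  move=> h2; have : `|d| * (C * `|b|) <= (2 * M * r) * (12 * M ^+ 2).
    by apply: ler_pM => //; rewrite mulr_ge0 // ltW.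
  lra.
split => //.
have h2 : `|hX| <= D + `|Hy| by have := absB_le _ _ _ _ hXY (lexx _); lra.
have : 4 * (C * `|Hy|) <= C * (eps * r).
  have : 960 * M ^+ 3 * r <= C * eps * r by rewrite ler_pM2r.
  lra.
move=> h3; have : 4 * `|Hy| <= eps * r.
  by rewrite -(ler_pM2l C0); lra.
lra.
Qed.


Lemma final_phi (M r C D eps a d Hb Hy hX pX pQ pB : R) :
  1 <= M -> 0 < r -> 0 < C -> 0 <= D -> `|a| <= 1 -> `|d| <= 2 * M * r ->
  C * `|Hb| <= 216 * M ^+ 3 * r -> C * `|Hy| <= 240 * M ^+ 3 * r ->
  pQ - pB = - a * d * (Hb + Hy) / 2 ->
  `|pX - pQ| <= D ^+ 2 + D * (`|hX| + `|Hy|) / 2 ->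
  `|hX| <= 2 * M * r -> `|Hy| <= 3 * M * r ->
  8 * (D ^+ 2 + 3 * M * r * D) <= eps ^+ 2 * r ^+ 2 ->
  3840 * M ^+ 4 <= C * eps ^+ 2 ->
  `|pX - pB| <= (eps * r / 2) ^+ 2.
Proof.
move=> M1 r0 C0 D0 ha hd hB hY e hp hx hy h8 hC.
have a0 := normr_ge0 a; have d0 := normr_ge0 d.
have S0 := normr_ge0 (Hb + Hy).
have hS : C * `|Hb + Hy| <= 456 * M ^+ 3 * r.
  have : C * `|Hb + Hy| <= C * (`|Hb| + `|Hy|) by rewrite ler_pM2l // ler_normD.
  lra.
have h1 : `|pQ - pB| <= `|d| * `|Hb + Hy| / 2.
  rewrite e !normrM normrN (ger0_norm (_ : 0 <= 2^-1)) ?invr_ge0 //.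
  rewrite ler_pM2r ?invr_gt0 //.
  have dS0 : 0 <= `|d| * `|Hb + Hy| by exact: mulr_ge0.
  nra.
have h2 : C * `|pQ - pB| <= 456 * M ^+ 4 * r ^+ 2.
  have : C * `|pQ - pB| <= `|d| * (C * `|Hb + Hy|) / 2.
    have : C * `|pQ - pB| <= C * (`|d| * `|Hb + Hy| / 2) by rewrite ler_pM2l.
    lra.
  have : `|d| * (C * `|Hb + Hy|) <= (2 * M * r) * (456 * M ^+ 3 * r).
    apply: ler_pM => //; first by rewrite mulr_ge0 // ltW.
  lra.
have h3 : `|pQ - pB| <= eps ^+ 2 * r ^+ 2 / 8.
  have : C * (8 * `|pQ - pB|) <= C * (eps ^+ 2 * r ^+ 2).
    have : 3840 * M ^+ 4 * r ^+ 2 <= C * eps ^+ 2 * r ^+ 2.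
      by rewrite ler_pM2r // exprn_gt0.
    have : 0 <= M ^+ 4 * r ^+ 2 by rewrite mulr_ge0 // exprn_ge0 // ?ltW //; lra.
    lra.
  rewrite ler_pM2l //; lra.
have h4 : `|pX - pQ| <= eps ^+ 2 * r ^+ 2 / 8.
  have : D * (`|hX| + `|Hy|) <= D * (5 * M * r) by apply: ler_wpM2l => //; lra.
  have : 0 <= M * r * D by rewrite !mulr_ge0 // ?ltW //; lra.
  lra.
have := ler_normD (pX - pQ) (pQ - pB).
have -> : pX - pQ + (pQ - pB) = pX - pB by ring.
have -> : (eps * r / 2) ^+ 2 = eps ^+ 2 * r ^+ 2 / 4 by field.
lra.
Qed.


Lemma core (M eps r C D y0 : R) (X Y : R -> Hpt R) q a b :
  1 <= M -> 0 < eps -> eps <= 1 -> 0 < r -> 1 <= C -> 0 < D -> D <= r ->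
  4 * M * D <= C * r -> 24 * M ^+ 2 <= C -> 960 * M ^+ 3 <= C * eps ->
  4 * D <= eps * r -> 3840 * M ^+ 4 <= C * eps ^+ 2 ->
  8 * (D ^+ 2 + 3 * M * r * D) <= eps ^+ 2 * r ^+ 2 ->
  a ^+ 2 + b ^+ 2 = 1 ->
  (forall y, `|y - y0| <= C * r -> hdist (X y) (Y y) <= M * r) ->
  (forall y y', `|y - y0| <= C * r -> `|y' - y0| <= C * r ->
     `|y - y'| <= M * hdist (X y) (X y')) ->
  (forall y, `|y - y0| <= r -> hdist (X y) (X y0) <= M * r) ->
  (forall y, `|y - y0| <= C * r -> exists s, hdist (Y y) (s, 0, 0) <= D) ->
  (forall y, `|y - y0| <= C * r -> exists s, hdist (X y) (lineQ q a b s) <= D) ->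
  exists c, forall y, `|y - y0| <= r ->
    `|hy (X y)| <= eps * r / 2 /\ `|phi (X y) - c| <= (eps * r / 2) ^+ 2.
Proof.
move=> M1 e0 e1 r0 C1 D0 Dr hMD hC24 hC960 hDe hC3840 h8 ab H1 H2 H3 H0 Ht.
have C0 : 0 < C := lt_le_trans ltr01 C1.
have Cr0 : 0 <= C * r by rewrite mulr_ge0 // ltW.
have rB : forall y, `|y - y0| <= C * r -> exists s,
    [/\ hdist (X y) (lineQ q a b s) <= D, `|hy (X y)| <= 2 * M * r,
    `|hy (lineQ q a b s)| <= 3 * M * r & `|phi (lineQ q a b s)| <= 9 * M ^+ 2 * r ^+ 2].
  move=> y hy; apply: stepB => //; [exact: H1 | exact: H0 | exact: Ht].
have ina : `|(y0 - C * r) - y0| <= C * r.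
  by rewrite (_ : y0 - C * r - y0 = - (C * r)); [rewrite normrN ger0_norm | ring].
have inb : `|y0 - y0| <= C * r by rewrite subrr normr0.
have inc : `|(y0 + C * r) - y0| <= C * r.
  by rewrite (_ : y0 + C * r - y0 = C * r); [rewrite ger0_norm | ring].
have [sa [qa _ ya pa]] := rB _ ina.
have [sb [qb _ yb pb]] := rB _ inb.
have [sc [qc _ yc pc]] := rB _ inc.
have sep : forall yi yj si sj, `|yi - y0| <= C * r -> `|yj - y0| <= C * r ->
    C * r <= `|yi - yj| ->
    hdist (X yi) (lineQ q a b si) <= D -> hdist (X yj) (lineQ q a b sj) <= D ->
    C * r <= 2 * M * `|sj - si|.
  move=> yi yj si sj hi hj hij di dj; rewrite distrC.
  exact: (pair_sep _ _ _ _ _ _ _ _ _ _ _ _ M1 ab hMD hij (H2 _ _ hi hj) di dj).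
have sab : C * r <= 2 * M * `|sb - sa|.
  apply: (sep _ _ _ _ ina inb _ qa qb).
  by rewrite (_ : y0 - C * r - y0 = - (C * r)); [rewrite normrN ger0_norm | ring].
have sbc : C * r <= 2 * M * `|sc - sb|.
  apply: (sep _ _ _ _ inb inc _ qb qc).
  by rewrite (_ : y0 - (y0 + C * r) = - (C * r)); [rewrite normrN ger0_norm | ring].
have sac : C * r <= 2 * M * `|sc - sa|.
  apply: (sep _ _ _ _ ina inc _ qa qc).
  rewrite (_ : y0 - C * r - (y0 + C * r) = - (2 * (C * r))); last by ring.
  rewrite normrN ger0_norm; last by clear -Cr0; lra.
  clear -Cr0; lra.
have hb : C * `|b| <= 12 * M ^+ 2.
  apply: (b_bound M r C (sb - sa) b (hy (lineQ q a b sb)) (hy (lineQ q a b sa)) M1 r0 sab _ yb ya).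
  rewrite !lineQ_hy; ring.
have ha : 1 / 2 <= `|a| := a_bound M C a b M1 hC24 hb ab.
have Sab := S_bound M r C (sb - sa) a _ _ _ M1 r0 sab ha (lineQ_phi q a b sa sb) pa pb.
have Sbc := S_bound M r C (sc - sb) a _ _ _ M1 r0 sbc ha (lineQ_phi q a b sb sc) pb pc.
have Sac := S_bound M r C (sc - sa) a _ _ _ M1 r0 sac ha (lineQ_phi q a b sa sc) pa pc.
have hB0 := mid_bound _ _ _ _ _ Sab Sbc Sac C0.
have hB : C * `|hy (lineQ q a b sb)| <= 216 * M ^+ 3 * r by clear -hB0; lra.
exists (phi (lineQ q a b sb)) => y hy0.
have rCr : r <= C * r by rewrite ler_peMl // ltW.
have hyC : `|y - y0| <= C * r by clear -hy0 rCr; lra.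
have [sy [qy hXy yy py]] := rB y hyC.
have dd : `|sy - sb| <= 2 * M * r.
  rewrite -(lineQ_dist q a b) //.
  have t1 := hdist_tri (lineQ q a b sy) (X y) (lineQ q a b sb).
  have t2 := hdist_tri (X y) (X y0) (lineQ q a b sb).
  rewrite (hdist_sym (lineQ q a b sy) (X y)) in t1.
  have := H3 y hy0.
  have : 2 * D <= M * r.
    have : r <= M * r by rewrite ler_peMl // ltW.
    have : eps * r <= 1 * r by rewrite ler_pM2r.
    move=> h3 h4; clear -hDe h3 h4 r0; lra.
  move=> h1 h2; clear -t1 t2 h1 h2 qy qb; lra.
have MD0 : 0 <= D := ltW D0.
have [nb1 _ nb2] := near_bounds _ _ _ MD0 qy.
have [fy1 fy2] := final_hy M r C D eps b (sy - sb) (hy (lineQ q a b sb)) (hy (lineQ q a b sy))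
  (hy (X y)) M1 r0 C0 MD0 hb hB dd (ltac:(rewrite !lineQ_hy; ring)) nb1 hDe hC960.
split => //.
have a1 : `|a| <= 1.
  apply: abs_le_sq => //; rewrite expr1n; have := sqr_ge0 b; clear -ab; lra.
exact: (final_phi M r C D eps a (sy - sb) _ _ _ _ _ _ M1 r0 C0 MD0 a1 dd hB fy1
  (lineQ_phi q a b sb sy) nb2 hXy yy h8 hC3840).
Qed.

End C.
Arguments core {R}.

Section Mn.
Variable R : realType.

Lemma consts (M eps C k : R) : 1 <= M -> 0 < eps -> eps <= 1 ->
  C * eps ^+ 2 = 4000 * M ^+ 4 -> k * (32 * M) = eps ^+ 2 -> 0 < C -> 0 < k ->
  10 <= C /\ 1 <= C /\ k <= 1 /\ 4 * M * k <= C /\ 24 * M ^+ 2 <= C /\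
      960 * M ^+ 3 <= C * eps /\ 4 * k <= eps /\
      3840 * M ^+ 4 <= C * eps ^+ 2 /\ 8 * (k ^+ 2 + 3 * M * k) <= eps ^+ 2.
Proof.
move=> M1 e0 e1 CE kE C0 k0.
have M0 : 0 < M := lt_le_trans ltr01 M1.
have e21 : eps ^+ 2 <= eps by rewrite expr2 ger_pMl.
have e2 : eps ^+ 2 <= 1 by clear -e21 e1; lra.
have M2 : 1 <= M ^+ 2 by rewrite expr2 -[1]mul1r ler_pM.
have M3 : M ^+ 2 <= M ^+ 3 by rewrite exprS ler_peMl // (le_trans ler01 M2).
have M4 : M ^+ 3 <= M ^+ 4 by rewrite (exprS _ 3) ler_peMl // (le_trans ler01 (le_trans M2 M3)).
have C4 : 4000 * M ^+ 4 <= C.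
  have : C * eps ^+ 2 <= C * 1 by rewrite ler_pM2l.
  by clear -CE; lra.
have Ce : 4000 * M ^+ 4 <= C * eps.
  have : C * eps ^+ 2 <= C * eps by rewrite ler_pM2l.
  by clear -CE; lra.
have k32 : k * 32 <= eps ^+ 2.
  have : k * 32 <= k * (32 * M) by rewrite ler_pM2l //; clear -M1; lra.
  by clear -kE; lra.
have Mk : 4 * M * k <= 1.
  by clear -kE e2; lra.
split; first by clear -C4 M2 M3 M4; lra.
split; first by clear -C4 M2 M3 M4; lra.
split; first by clear -k32 e2; lra.
split; first by clear -C4 M2 M3 M4 Mk; lra.
split; first by clear -C4 M2 M3 M4; lra.
split; first by clear -Ce M2 M3 M4; lra.
split; first by clear -k32 e21 e0; lra.
split; first by clear -CE M2 M3 M4; lra.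
have kk : k ^+ 2 <= k by rewrite expr2 ger_pMl //; clear -k32 e2; lra.
have kM : k <= M * k by rewrite ler_peMl // ltW.
by clear -kE kk kM; lra.
Qed.

Local Open Scope classical_set_scope.

Lemma horiz_nonempty (L : set (Hpt R)) : horiz_line_H L -> exists e, L e.
Proof. by case=> p [a [b [_ ->]]]; exists (hmul p (0 * a, 0 * b, 0)); exists 0. Qed.

Lemma nbhd_pt (P : Hpt R) (L : set (Hpt R)) (rho D : R) :
  horiz_line_H L -> nbhd L rho P -> rho < D -> exists e, L e /\ hdist P e < D.
Proof.
move=> hL; rewrite /nbhd /hdist_set /= => h1 h2.
have [e0 Le0] := horiz_nonempty _ hL.
have ne : [set hdist P e | e in L] !=set0 by exists (hdist P e0); exists e0.
have [_ [e Le <-] lt] := inf_lt ne (le_lt_trans h1 h2).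
by exists e.
Qed.

Lemma nbhd_in (P e : Hpt R) (L : set (Hpt R)) (rho : R) :
  L e -> hdist P e <= rho -> nbhd L rho P.
Proof.
move=> Le h; rewrite /nbhd /hdist_set /=; apply: le_trans h.
apply: ge_inf; last by exists e.
by exists 0 => _ [x _ <-]; exact: hdist_ge0.
Qed.

Lemma psi_base (p h : Hpt R) a b : psi p a b (hmul p h) = rot a b h.
Proof.
rewrite /psi; congr rot.
case: h => [[x1 y1] t1]; case: p => [[x3 y3] t3].
rewrite /hmul /hinv /hx /hy /ht /=; congr (_, _, _); ring.
Qed.

Lemma unit_norm (a b n : R) : 0 < n -> n ^+ 2 = a ^+ 2 + b ^+ 2 ->
  (a / n) ^+ 2 + (b / n) ^+ 2 = 1.
Proof. move=> n0 e; rewrite !expr_div_n -mulrDl -e divff // gt_eqF // exprn_gt0 //. Qed.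

Lemma rot_dir (a0 b0 n s c : R) : 0 < n -> n ^+ 2 = a0 ^+ 2 + b0 ^+ 2 ->
  rot (a0 / n) (b0 / n) (s * a0, s * b0, c) = (s * n, 0, c).
Proof.
move=> n0 e; rewrite /rot /hx /hy /ht /=; congr (_, _, _).
  rewrite (_ : a0 / n * (s * a0) + b0 / n * (s * b0) = s * (a0 ^+ 2 + b0 ^+ 2) / n);
    last by field; rewrite gt_eqF.
  by rewrite -e; field; rewrite gt_eqF.
field; by rewrite gt_eqF.
Qed.

Lemma rot_gen (e1 e2 a b s : R) :
  let a2 := e1 * a + e2 * b in let b2 := - e2 * a + e1 * b in
  let n := Num.sqrt (a2 ^+ 2 + b2 ^+ 2) in 0 < n ->
  rot e1 e2 (s * a, s * b, 0) = ((s * n) * (a2 / n), (s * n) * (b2 / n), 0).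
Proof.
move=> a2 b2 n n0; rewrite /rot /hx /hy /ht /=; congr (_, _, _); rewrite /a2 /b2; field;
  by rewrite gt_eqF.
Qed.


Lemma pair_pos (a b : R) : (a, b) != (0, 0) -> 0 < a ^+ 2 + b ^+ 2.
Proof.
move=> ab; rewrite lt_neqAle addr_ge0 ?sqr_ge0 // andbT eq_sym paddr_eq0 ?sqr_ge0 //.
rewrite !sqrf_eq0; apply: contra ab => /andP[/eqP -> /eqP ->]; done.
Qed.

Lemma rot_sq (e1 e2 a b : R) : e1 ^+ 2 + e2 ^+ 2 = 1 ->
  (e1 * a + e2 * b) ^+ 2 + (- e2 * a + e1 * b) ^+ 2 = a ^+ 2 + b ^+ 2.
Proof.
move=> h; apply: (@eq_mod R (a ^+ 2 + b ^+ 2) (e1 ^+ 2 + e2 ^+ 2 - 1)); first by rewrite h subrr.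
ring.
Qed.

Lemma hmul_c (p : Hpt R) (c s a b : R) :
  hmul (hmul p (0, 0, c)) (s * a, s * b, 0) = hmul p (s * a, s * b, c).
Proof.
case: p => [[x1 y1] t1]; rewrite /hmul /hx /hy /ht /=; congr (_, _, _); ring.
Qed.

Lemma dpar_le (y t y' t' rho : R) : 0 <= rho ->
  dpar (y, t) (y', t') <= rho <-> `|y - y'| <= rho /\ `|t - t'| <= rho ^+ 2.
Proof.
move=> h; rewrite /dpar /= ge_max sqrt_le_iff //; split; first by move/andP.
by case=> -> ->.
Qed.

Lemma dpar_ge (y t y' t' : R) : `|y - y'| <= dpar (y, t) (y', t').
Proof. by rewrite /dpar /= le_max lexx. Qed.


End Mn.
Arguments consts {R M eps C k}. Arguments horiz_nonempty {R}. Arguments nbhd_pt {R P L rho D}.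
Arguments nbhd_in {R P e L rho}. Arguments psi_base {R}. Arguments unit_norm {R a b n}.
Arguments rot_dir {R a0 b0 n s c}. Arguments rot_gen {R e1 e2 a b s}. Arguments pair_pos {R a b}.
Arguments rot_sq {R e1 e2 a b}. Arguments hmul_c {R}. Arguments dpar_le {R}. Arguments dpar_ge {R}.


Local Open Scope classical_set_scope.
Theorem proposition4p6 (R : realType) (M : R) (hM : 1 <= M) :
  forall eps : R, 0 < eps <= 1 ->
  exists C : R, 10 <= C /\
  exists delta : R, 0 < delta /\
  forall f : Wpt R -> Hpt R, bilipschitz M f ->
  forall (w : Wpt R) (r : R), 0 < r ->
    (ruler_coeff f w (C * r) < delta%:E)%E ->
    (beta_coeff f w r < eps%:E)%E.
Proof.
move=> eps /andP[e0 e1].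
have M0 : 0 < M := lt_le_trans ltr01 hM.
pose C := 4000 * M ^+ 4 / eps ^+ 2; pose k := eps ^+ 2 / (32 * M).
have CE : C * eps ^+ 2 = 4000 * M ^+ 4 by rewrite /C; field; rewrite gt_eqF.
have kE : k * (32 * M) = eps ^+ 2 by rewrite /k; field; rewrite gt_eqF.
have C0 : 0 < C.
  rewrite /C; apply: divr_gt0; last exact: exprn_gt0.
  have := exprn_gt0 4 M0; clear; lra.
have k0 : 0 < k.
  rewrite /k; apply: divr_gt0; first exact: exprn_gt0.
  clear -M0; lra.
clearbody C k.
have [C10 [C1 [k1 [hMk [hC24 [hC960 [hk4 [hC3840 hk8]]]]]]]] := consts hM e0 e1 CE kE C0 k0.
exists C; split => //; exists (k / C); split; first by rewrite divr_gt0.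
move=> f fbl [y0 t0] r r0 hrul.
have [_ [rho [rho0 hrho] <-] rholt] := ereal_inf_lt hrul.
rewrite lte_fin in rholt.
set D := k * r.
have rhoD : rho * (C * r) < D.
  rewrite /D mulrA ltr_pM2r //; move: rholt; rewrite ltr_pdivlMr //.
have D0 : 0 < D by rewrite mulr_gt0.
have [L0 [hL0 sub0]] := hrho t0.
have hL0' := hL0.
case: hL0' => p [a0 [b0 [ab0 eL0]]].
have pos0 := pair_pos ab0.
set n0 := Num.sqrt (a0 ^+ 2 + b0 ^+ 2).
have n0p : 0 < n0 by rewrite sqrtr_gt0.
have n0e : n0 ^+ 2 = a0 ^+ 2 + b0 ^+ 2 by rewrite sqr_sqrtr // ltW.
set e1' := a0 / n0; set e2' := b0 / n0.
have u0 : e1' ^+ 2 + e2' ^+ 2 = 1 by exact: unit_norm.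
pose Lc (c : R) := [set P : Hpt R | exists s, P = hmul (hmul p (0, 0, c)) (s * a0, s * b0, 0)].
pose lam := [set z : R * R | exists s : R, z = (hx p + s * a0, hy p + s * b0)].
pose V := [set P : Hpt R | lam (hx P, hy P)].
have hV : vertical_plane V.
  exists lam; split => //; exists (hx p), (hy p), a0, b0; split => //.
have Lc_h c : horiz_line_H (Lc c) by exists (hmul p (0, 0, c)), a0, b0.
have Lc_V c : (Lc c `<=` V)%classic.
  move=> _ [s ->]; rewrite /V /lam /=; exists s; rewrite /hmul /hx /hy /=.
  congr (_, _); ring.
apply: (@le_lt_trans _ _ (eps / 2)%:E); last by rewrite lte_fin; clear -e0; lra.
apply: (@le_trans _ _ (beta_plane f V (y0, t0) r)).
  by apply: ereal_inf_lbound; exists V.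
apply: ereal_inf_lbound; exists (eps / 2) => //; split; first by clear -e0; lra.
move=> t.
have ep0 : 0 <= eps / 2 * r by rewrite mulr_ge0 // ?ltW // divr_gt0.
case: (leP `|t - t0| (r ^+ 2)) => ht; last first.
  exists (Lc 0); split => //; split => //.
  move=> _ [[y' t'] [vt vb] <-]; exfalso; rewrite /horiz_line_W /= in vt.
  move: vb; rewrite /Wball /= => /(dpar_le _ _ _ _ _ (ltW r0)) [_].
  by rewrite distrC vt; move=> h; move: ht; rewrite ltNge h.
have [Lt [hLt subt]] := hrho t.
have hLt' := hLt.
case: hLt' => q [a' [b' [ab' eLt]]].
set a2 := e1' * a' + e2' * b'; set b2 := - e2' * a' + e1' * b'.
have pos1 : 0 < a2 ^+ 2 + b2 ^+ 2 by rewrite /a2 /b2 rot_sq // pair_pos.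
set n1 := Num.sqrt (a2 ^+ 2 + b2 ^+ 2).
have n1p : 0 < n1 by rewrite sqrtr_gt0.
have n1e : n1 ^+ 2 = a2 ^+ 2 + b2 ^+ 2 by rewrite sqr_sqrtr // ltW.
have u1 : (a2 / n1) ^+ 2 + (b2 / n1) ^+ 2 = 1 by exact: unit_norm.
pose X y := psi p e1' e2' (f (y, t)).
pose Y y := psi p e1' e2' (f (y, t0)).
have rCr : r <= C * r by rewrite ler_peMl // ltW.
have H1 : forall y, `|y - y0| <= C * r -> hdist (X y) (Y y) <= M * r.
  move=> y _; rewrite /X /Y hdist_psi //.
  have /andP[_ h] := fbl (y, t) (y, t0); apply: le_trans h _.
  rewrite ler_pM2l //; apply/dpar_le; first exact: ltW.
  by rewrite subrr normr0 ltW.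
have H2 : forall y y', `|y - y0| <= C * r -> `|y' - y0| <= C * r ->
     `|y - y'| <= M * hdist (X y) (X y').
  move=> y y' _ _; rewrite /X hdist_psi //.
  have /andP[h _] := fbl (y, t) (y', t).
  apply: le_trans (dpar_ge y t y' t) _.
  by rewrite -ler_pdivrMl // mulrC.
have H3 : forall y, `|y - y0| <= r -> hdist (X y) (X y0) <= M * r.
  move=> y hy; rewrite /X hdist_psi //.
  have /andP[_ h] := fbl (y, t) (y0, t); apply: le_trans h _.
  rewrite ler_pM2l //; apply/dpar_le; first exact: ltW.
  by rewrite subrr normr0 exprn_ge0 // ltW.
have H0 : forall y, `|y - y0| <= C * r -> exists s, hdist (Y y) (s, 0, 0) <= D.
  move=> y hy.
  have inB : (horiz_line_W t0 `&` Wball (y0, t0) (C * r)) (y, t0).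
    split => //; rewrite /Wball /=; apply/dpar_le; first by rewrite mulr_ge0 // ltW.
    by rewrite distrC hy subrr normr0 exprn_ge0 // mulr_ge0 // ltW.
  have [e [Le he]] := nbhd_pt hL0 (sub0 _ (ex_intro2 _ _ _ inB erefl)) rhoD.
  move: Le; rewrite eL0 => -[s es].
  exists (s * n0).
  have -> : ((s * n0, 0, 0) : Hpt R) = psi p e1' e2' e.
    by rewrite es psi_base /e1' /e2' rot_dir.
  by rewrite /Y hdist_psi // ltW.
have Ht : forall y, `|y - y0| <= C * r ->
    exists s, hdist (X y) (lineQ (psi p e1' e2' q) (a2 / n1) (b2 / n1) s) <= D.
  move=> y hy.
  have inB : (horiz_line_W t `&` Wball (y0, t0) (C * r)) (y, t).
    split => //; rewrite /Wball /=; apply/dpar_le; first by rewrite mulr_ge0 // ltW.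
    rewrite distrC hy distrC; split => //; apply: le_trans ht _.
    rewrite -[r ^+ 2]mul1r (_ : (C * r) ^+ 2 = C ^+ 2 * r ^+ 2); last by ring.
    by rewrite ler_pM2r ?exprn_gt0 // expr2 -[1]mul1r ler_pM.
  have [e [Le he]] := nbhd_pt hLt (subt _ (ex_intro2 _ _ _ inB erefl)) rhoD.
  move: Le; rewrite eLt => -[s es].
  exists (s * n1).
  have -> : lineQ (psi p e1' e2' q) (a2 / n1) (b2 / n1) (s * n1) = psi p e1' e2' e.
    by rewrite es psi_mul // rot_gen.
  by rewrite /X hdist_psi // ltW.
have Dr : D <= r by rewrite /D ler_piMl // ltW.
have hMD : 4 * M * D <= C * r by rewrite /D mulrA ler_pM2r.
have hDe : 4 * D <= eps * r by rewrite /D mulrA ler_pM2r.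
have h8 : 8 * (D ^+ 2 + 3 * M * r * D) <= eps ^+ 2 * r ^+ 2.
  rewrite (_ : 8 * (D ^+ 2 + 3 * M * r * D) = 8 * (k ^+ 2 + 3 * M * k) * r ^+ 2); last first.
    by rewrite /D; ring.
  by rewrite ler_pM2r // exprn_gt0.
have [c hc] := core M eps r C D y0 X Y (psi p e1' e2' q) (a2 / n1) (b2 / n1)
  hM e0 e1 r0 C1 D0 Dr hMD hC24 hC960 hDe hC3840 h8 u1 H1 H2 H3 H0 Ht.
exists (Lc c); split => //; split => //.
move=> _ [[y' t'] [vt vb] <-]; rewrite /horiz_line_W /= in vt; subst t'.
move: vb; rewrite /Wball /= => /(dpar_le _ _ _ _ _ (ltW r0)) [hy1 _].
have hy1' : `|y' - y0| <= r by rewrite distrC.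
have [hcy hcp] := hc y' hy1'.
set s := hx (X y') / n0.
apply: (@nbhd_in _ _ (hmul (hmul p (0, 0, c)) (s * a0, s * b0, 0))); first by exists s.
rewrite -(hdist_psi p e1' e2' _ _ u0) hmul_c psi_base /e1' /e2' rot_dir //.
rewrite (_ : s * n0 = hx (X y')); last by rewrite /s; field; rewrite gt_eqF.
apply: dist_flat => //.
  by rewrite (_ : eps / 2 * r = eps * r / 2) //; ring.
by rewrite (_ : eps / 2 * r = eps * r / 2) //; ring.
Qed.
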